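(* Let $E$ be a regular hermitian $(a,b)$-module of rank $n$. Suppose there exists $\lambda\in\mathbb{C}$ such that $E$ contains two distinct normal sub-$(a,b)$-modules $F\simeq E_f$ and $G\simeq E_g$ of rank one with $f\equiv g\equiv\lambda \pmod{\mathbb{Z}}$. Then there exist normal sub-$(a,b)$-modules $F_1\subset F_{n-1}$ of $E$, of ranks $1$ and $n-1$ respectively, such that the adjoint of $E/F_{n-1}$ is isomorphic to $F_1$ and $F_{n-1}/F_1$ is hermitian.
   Context: An $(a,b)$-module is a free module $E$ of finite rank over $\mathbb{C}[[b]]$ with a $\mathbb{C}$-linear endomorphism $a$ satisfying $ab-ba=b^2$. A sub-$(a,b)$-module is a sub-$\mathbb{C}[[b]]$-module stable by $a$; it is normal if the quotient is free over $\mathbb{C}[[b]]$. $E$ is regular if it embeds into an $(a,b)$-module $E'$ with $aE'\subset bE'$. $E_\lambda$ is the rank-one (elementary) $(a,b)$-module generated by $e_\lambda$ with $ae_\lambda=\lambda be_\lambda$; $\lambda$ is its parameter. The dual $M^*$ of an $(a,b)$-module $M$ is $\mathrm{Hom}_{\mathbb{C}[[b]]}(M,E_0)$ with $(a\cdot\phi)(x)=a\phi(x)-\phi(ax)$; the conjugate $\breve M$ is the set $M$ with $a,b$ replaced by $-a,-b$; the adjoint $\check{M}^*$ is the conjugate of $M^*$. An $(a,b)$-hermitian form on $M$ is a $\mathbb{C}[[b]]$-bilinear $H:M\times\breve M\to E_0$ with $aH(v,w)=H(av,w)+H(v,a_{\breve M}w)$ (where $a_{\breve M}=-a$) and such that $H(v,w)=S(b)e_0$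 implies $H(w,v)=S(-b)e_0$; it is non-degenerate if $y\mapsto H(\cdot,y)$ is an isomorphism $M\to\check{M}^*$. $M$ is hermitian if it admits a non-degenerate hermitian form. *)

(* Defs.v *)
From HB Require Import structures.
From mathcomp Require Import all_boot all_order all_algebra.
From mathcomp Require Import Rstruct.
From mathcomp Require Import complex.
Set Implicit Arguments. Unset Strict Implicit. Unset Printing Implicit Defensive.
Import Order.TTheory GRing.Theory Num.Theory.
Local Open Scope ring_scope.

Definition CC : Type := complex Rdefinitions.R.

(* Formal power series C[[b]]: a series is its coefficient sequence.   *)
Definition PS : Type := nat -> CC.

Definition ps0 : PS := fun _ => 0.
Definition pscst (c : CC) : PS := fun k => if k is 0%N then c else 0.
Definition psadd (f g : PS) : PS := fun k => f k + g k.
Definition psopp (f : PS) : PS := fun k => - f k.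
Definition psmul (f g : PS) : PS :=
  fun k => \sum_(i < k.+1) f i * g (k - i)%N.
Definition psb : PS := fun k => (k == 1%N)%:R.
Definition psb2 : PS := psmul psb psb.
Definition psder (f : PS) : PS := fun k => k.+1%:R * f k.+1.
Definition pssig (f : PS) : PS := fun k => (-1) ^+ k * f k.
Definition pssum (n : nat) (F : 'I_n -> PS) : PS :=
  fun k => \sum_(i < n) F i k.

(* An (a,b)-module E of rank n, free over C[[b]] with basis e_0..e_{n-1},
   is determined by the matrix of a in that basis:
      a e_j = sum_i amat i j e_i .
   An element x = sum_j x_j e_j is its coordinate vector; since
   a (S e_j) = S a e_j + b^2 S' e_j (from ab - ba = b^2), we get
      (a x)_i = sum_j amat i j * x_j + b^2 * x_i'.
   Conversely any matrix defines an (a,b)-module this way.            *)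
Record abmod := ABMod { rk : nat ; amat : 'I_rk -> 'I_rk -> PS }.

Definition vec (M : abmod) : Type := 'I_(rk M) -> PS.

Definition vzero (M : abmod) : vec M := fun _ => ps0.
Definition vadd (M : abmod) (x y : vec M) : vec M := fun i => psadd (x i) (y i).
Definition vopp (M : abmod) (x : vec M) : vec M := fun i => psopp (x i).
Definition vscale (M : abmod) (s : PS) (x : vec M) : vec M :=
  fun i => psmul s (x i).
Definition aop (M : abmod) (x : vec M) : vec M :=
  fun i => psadd (pssum (fun j => psmul (amat i j) (x j))) (psmul psb2 (psder (x i))).

Definition linmap (m n : nat) : Type := 'I_m -> 'I_n -> PS.
Definition lapply (m n : nat) (Phi : linmap m n) (x : 'I_n -> PS) : 'I_m -> PS :=
  fun i => pssum (fun j => psmul (Phi i j) (x j)).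

Definition Elem (l : CC) : abmod :=
  @ABMod 1 (fun _ _ => psmul (pscst l) psb).
Definition aE0 (S : PS) : PS := psmul psb2 (psder S).

Definition is_morph (M N : abmod) (Phi : linmap (rk N) (rk M)) : Prop :=
  forall x : vec M, lapply Phi (aop x) = aop (lapply Phi x : vec N).

Definition injective_lin (m n : nat) (Phi : linmap m n) : Prop :=
  forall x : 'I_n -> PS, lapply Phi x = (fun _ => ps0) -> x = (fun _ => ps0).

Definition is_submod (M : abmod) (P : vec M -> Prop) : Prop :=
  [/\ P (@vzero M),
      (forall x y, P x -> P y -> P (vadd x y)),
      (forall s x, P x -> P (vscale s x)) &
      (forall x, P x -> P (aop x))].

Definition sub_rank (M : abmod) (P : vec M -> Prop) (r : nat) : Prop :=
  exists v : 'I_r -> vec M,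
    [/\ (forall i, P (v i)),
        (forall x, P x <-> exists s : 'I_r -> PS,
                      x = (fun k => pssum (fun i => psmul (s i) (v i k)))) &
        (forall s : 'I_r -> PS,
           (fun k => pssum (fun i => psmul (s i) (v i k))) = @vzero M ->
           s = (fun _ => ps0))].

(* P is normal: the quotient M/P is a free C[[b]]-module, i.e. there is a
   surjective C[[b]]-linear map M -> C[[b]]^m with kernel P *)
Definition is_normal (M : abmod) (P : vec M -> Prop) : Prop :=
  exists (m : nat) (Phi : linmap m (rk M)),
    (forall y : 'I_m -> PS, exists x : vec M, lapply Phi x = y) /\
    (forall x : vec M, P x <-> lapply Phi x = (fun _ => ps0)).

Definition sub_iso (N M : abmod) (P : vec M -> Prop) : Prop :=
  exists Phi : linmap (rk M) (rk N),
    [/\ is_morph Phi, injective_lin Phi &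
        (forall y : vec M, P y <-> exists x : vec N, lapply Phi x = y)].

(* For sub-(a,b)-modules P' ⊂ P of M, the quotient P/P' is isomorphic to
   the (a,b)-module Q: there is a C[[b]]-linear map Psi (given on all of M)
   whose restriction to P is a morphism of (a,b)-modules P -> Q which is
   surjective with kernel P'. *)
Definition quot_iso (M : abmod) (P P' : vec M -> Prop) (Q : abmod) : Prop :=
  exists Psi : linmap (rk Q) (rk M),
    [/\ (forall x, P x -> lapply Psi (aop x) = aop (lapply Psi x : vec Q)),
        (forall y : vec Q, exists x, P x /\ lapply Psi x = y) &
        (forall x, P x -> (lapply Psi x = @vzero Q <-> P' x))].

Definition is_regular (M : abmod) : Prop :=
  exists (M' : abmod) (Phi : linmap (rk M') (rk M)),
    [/\ is_morph Phi, injective_lin Phi &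
        (forall x : vec M', exists y : vec M', aop x = vscale psb y)].

(* dual M* = Hom(M, E_0): a functional phi is given by its values
   c_j = phi(e_j); (a.phi)(e_j) = a_{E0}(phi e_j) - phi(a e_j)
                                  = b^2 c_j' - sum_i amat i j c_i,
   so M* is the (a,b)-module with matrix -(amat)^T in the dual basis. *)
Definition dual (M : abmod) : abmod :=
  @ABMod (rk M) (fun j i => psopp (amat i j)).
(* conjugate: same set, a -> -a, b -> -b.  In the same basis the new
   coordinates of x are the S(-b) of the old ones, and
   -a e_j = sum_i (-amat i j)(-b) ._new e_i. *)
Definition conjm (M : abmod) : abmod :=
  @ABMod (rk M) (fun i j => pssig (psopp (amat i j))).
Definition adjoint (M : abmod) : abmod := conjm (dual M).

(* (a,b)-hermitian forms: a C[[b]]-bilinear H : M x M^breve -> E_0 is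
   determined by its matrix h i j = H(e_i, e_j); since S ._breve w = S(-b) w,
      H(x, y) = sum_i sum_j x_i(b) y_j(-b) h i j . *)
Definition hform (M : abmod) (h : 'I_(rk M) -> 'I_(rk M) -> PS)
  (x y : vec M) : PS :=
  pssum (fun i => pssum (fun j => psmul (psmul (x i) (pssig (y j))) (h i j))).

Definition is_herm_form (M : abmod) (h : 'I_(rk M) -> 'I_(rk M) -> PS) : Prop :=
  [/\ (* a H(v,w) = H(av,w) + H(v, a_breve w), a_breve = -a *)
      (forall v w : vec M,
          aE0 (hform h v w) = psadd (hform h (aop v) w) (hform h v (vopp (aop w)))),
      (forall v w : vec M, hform h w v = pssig (hform h v w)) &
      (* non-degenerate: y |-> H(.,y) is bijective onto Hom_{C[[b]]}(M,E_0)
         (a C[[b]]-linear functional is x |-> sum_i x_i c_i) *)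
      (forall c : vec M, exists y : vec M,
          (forall x : vec M, hform h x y = pssum (fun i => psmul (x i) (c i))) /\
          (forall y' : vec M,
             (forall x : vec M, hform h x y' = pssum (fun i => psmul (x i) (c i))) ->
             y' = y))].

Definition is_hermitian (M : abmod) : Prop :=
  exists h, @is_herm_form M h.

(* Main.v *)
Require Import Defs.
From HB Require Import structures.
From mathcomp Require Import all_boot all_order all_algebra.
From mathcomp Require Import Rstruct.
From mathcomp Require Import complex.
Import GRing.Theory Num.Theory.
Local Open Scope ring_scope.

From mathcomp Require Import boolp.
From mathcomp Require Import ring.
Set Implicit Arguments. Unset Strict Implicit. Unset Printing Implicit Defensive.
Import Order.TTheory.


HB.instance Definition _ := gen_eqMixin PS.
HB.instance Definition _ := gen_choiceMixin PS.

Lemma psaddA : associative psadd.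
Proof. move=> f g h; apply/funext=> k; exact: addrA. Qed.
Lemma psaddC : commutative psadd.
Proof. move=> f g; apply/funext=> k; exact: addrC. Qed.
Lemma psadd0 : left_id ps0 psadd.
Proof. move=> f; apply/funext=> k; exact: add0r. Qed.
Lemma psaddN : left_inverse ps0 psopp psadd.
Proof. move=> f; apply/funext=> k; exact: addNr. Qed.

HB.instance Definition _ := GRing.isZmodule.Build PS psaddA psaddC psadd0 psaddN.

Lemma ps_add_coef (f g : PS) k : (f + g) k = f k + g k. Proof. by []. Qed.
Lemma ps_opp_coef (f : PS) k : (- f) k = - f k. Proof. by []. Qed.
Lemma ps_zero_coef k : (0 : PS) k = 0. Proof. by []. Qed.
Lemma ps_sub_coef (f g : PS) k : (f - g) k = f k - g k. Proof. by []. Qed.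
Lemma ps_sum_coef n (F : 'I_n -> PS) k : (\sum_(i < n) F i) k = \sum_(i < n) F i k.
Proof. elim: n F => [|n IH] F; first by rewrite !big_ord0.
rewrite !big_ord_recr /=; exact: (congr1 (fun x => x + F ord_max k) (IH _)). Qed.
Lemma ps_muln_coef (f : PS) n k : (f *+ n) k = f k *+ n.
Proof. elim: n => [|n IH]; by rewrite ?mulr0n // !mulrS ps_add_coef IH. Qed.

Definition Ptr (N : nat) (f : PS) : {poly CC} := \poly_(i < N) f i.

Lemma psmul_poly (f g : PS) N k : (k < N)%N -> psmul f g k = (Ptr N f * Ptr N g)`_k.
Proof.
move=> kN; rewrite coefM /psmul; apply: eq_bigr => i _.
rewrite /Ptr !coef_poly.
have ik : (i < N)%N by apply: leq_ltn_trans kN; rewrite -ltnS.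
have ik' : (k - i < N)%N by apply: leq_ltn_trans kN; exact: leq_subr.
by rewrite ik ik'.
Qed.

Lemma coefM_eq (p q r : {poly CC}) k :
  (forall i, (i <= k)%N -> p`_i = q`_i) -> (p * r)`_k = (q * r)`_k.
Proof.
move=> H; rewrite !coefM; apply: eq_bigr => i _; rewrite H //.
by rewrite -ltnS.
Qed.
Lemma coefM_eqr (p q r : {poly CC}) k :
  (forall i, (i <= k)%N -> p`_i = q`_i) -> (r * p)`_k = (r * q)`_k.
Proof. by move=> H; rewrite mulrC [r * _]mulrC; exact: coefM_eq. Qed.

Lemma psmulA : associative psmul.
Proof.
move=> f g h; apply/funext=> k.
rewrite (psmul_poly f (psmul g h) (ltnSn k)) (psmul_poly (psmul f g) h (ltnSn k)).
have -> : (Ptr k.+1 f * Ptr k.+1 (psmul g h))`_k =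
          (Ptr k.+1 f * (Ptr k.+1 g * Ptr k.+1 h))`_k.
  apply: coefM_eqr => i ik; rewrite /Ptr coef_poly ltnS ik.
  by apply: psmul_poly; rewrite ltnS.
have -> : (Ptr k.+1 (psmul f g) * Ptr k.+1 h)`_k =
          ((Ptr k.+1 f * Ptr k.+1 g) * Ptr k.+1 h)`_k.
  apply: coefM_eq => i ik; rewrite /Ptr coef_poly ltnS ik.
  by apply: psmul_poly; rewrite ltnS.
by rewrite mulrA.
Qed.

Lemma psmulC : commutative psmul.
Proof.
move=> f g; apply/funext=> k.
by rewrite !(psmul_poly _ _ (ltnSn k)) mulrC.
Qed.

Lemma psmul1 : left_id (pscst 1) psmul.
Proof.
move=> f; apply/funext=> k; rewrite /psmul big_ord_recl /= subn0 mul1r.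
rewrite big1 ?addr0 // => i _; by rewrite mul0r.
Qed.

Lemma psmulDl : left_distributive psmul psadd.
Proof.
move=> f g h; apply/funext=> k; rewrite /psmul /psadd -big_split /=.
by apply: eq_bigr => i _; rewrite mulrDl.
Qed.

Lemma ps1_neq0 : pscst 1 != 0.
Proof.
apply/eqP => H; have := congr1 (fun f : PS => f 0%N) H; rewrite /= ps_zero_coef.
by move/eqP; rewrite oner_eq0.
Qed.

HB.instance Definition _ := GRing.Zmodule_isComNzRing.Build PS psmulA psmulC psmul1 psmulDl ps1_neq0.

Lemma psmulE (f g : PS) : psmul f g = f * g. Proof. by []. Qed.
Lemma psaddE (f g : PS) : psadd f g = f + g. Proof. by []. Qed.
Lemma psoppE (f : PS) : psopp f = - f. Proof. by []. Qed.
Lemma ps0E : ps0 = 0. Proof. by []. Qed.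
Lemma ps1E : pscst 1 = 1. Proof. by []. Qed.
Lemma pssumE n (F : 'I_n -> PS) : pssum F = \sum_(i < n) F i.
Proof. by apply/funext=> k; rewrite ps_sum_coef. Qed.
Lemma ps_mul_coef (f g : PS) k : (f * g) k = \sum_(i < k.+1) f i * g (k - i)%N.
Proof. by []. Qed.


Definition th (f : PS) : PS := fun k => k%:R * f k.

Lemma psb_coef k : psb k = (k == 1%N)%:R. Proof. by []. Qed.
Lemma pscst_coef c k : pscst c k = if k is 0%N then c else 0. Proof. by []. Qed.

Lemma mulb_coef (f : PS) k : (psb * f) k = if k is k'.+1 then f k' else 0.
Proof.
rewrite ps_mul_coef; case: k => [|k].
  by rewrite big_ord1 psb_coef mul0r.
rewrite big_ord_recl psb_coef mul0r add0r big_ord_recl psb_coef /= mul1r subSS subn0.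
rewrite big1 ?addr0 // => i _; by rewrite psb_coef /= mul0r.
Qed.

Lemma mulcst_coef c (f : PS) k : (pscst c * f) k = c * f k.
Proof.
rewrite ps_mul_coef big_ord_recl /= subn0 big1 ?addr0 // => i _.
by rewrite mul0r.
Qed.

Lemma bcancel (f g : PS) : psb * f = psb * g -> f = g.
Proof.
move=> H; apply/funext=> k; have := congr1 (fun h : PS => h k.+1) H.
by rewrite /= !mulb_coef.
Qed.

Lemma powb_coef n (f : PS) j :
  (psb ^+ n * f) j = if (n <= j)%N then f (j - n)%N else 0.
Proof.
elim: n f j => [|n IH] f j; first by rewrite expr0 mul1r subn0.
rewrite exprSr -mulrA IH mulb_coef.
case: (ltngtP n j) => [nj|jn|<-].
- by rewrite -(subnSK nj).
- by [].
- by rewrite subnn.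
Qed.

Lemma powbcancel n (f g : PS) : psb ^+ n * f = psb ^+ n * g -> f = g.
Proof.
elim: n f g => [|n IH] f g; first by rewrite !mul1r.
by rewrite exprSr -!mulrA => /IH; exact: bcancel.
Qed.

Lemma bder (f : PS) : psmul psb2 (psder f) = psb * th f.
Proof.
rewrite /psb2 !psmulE -mulrA; congr (_ * _); apply/funext=> k.
rewrite mulb_coef; case: k => [|k]; first by rewrite /th mul0r.
by [].
Qed.

Lemma th_add (f g : PS) : th (f + g) = th f + th g.
Proof. by apply/funext=> k; rewrite /th ps_add_coef mulrDr. Qed.
Lemma th_opp (f : PS) : th (- f) = - th f.
Proof. by apply/funext=> k; rewrite /th ps_opp_coef mulrN. Qed.
Lemma th_sub (f g : PS) : th (f - g) = th f - th g.
Proof. by rewrite th_add th_opp. Qed.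
Lemma th0 : th 0 = 0.
Proof. by apply/funext=> k; rewrite /th ps_zero_coef mulr0. Qed.
Lemma th_sum n (F : 'I_n -> PS) : th (\sum_(i < n) F i) = \sum_(i < n) th (F i).
Proof.
elim: n F => [|n IH] F; first by rewrite !big_ord0 th0.
by rewrite !big_ord_recr th_add IH.
Qed.
Lemma th_cst c : th (pscst c) = 0.
Proof. by apply/funext=> k; case: k => [|k]; rewrite /th /= ?mul0r ?mulr0. Qed.
Lemma th_mul (f g : PS) : th (f * g) = th f * g + f * th g.
Proof.
apply/funext=> k; rewrite /th ps_add_coef !ps_mul_coef mulr_sumr -big_split /=.
apply: eq_bigr => i _.
have ik : (i <= k)%N by rewrite -ltnS.
rewrite -{1}(subnKC ik) natrD mulrDl; congr (_ + _); first by rewrite mulrA.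
by rewrite mulrCA.
Qed.
Lemma th_b : th psb = psb.
Proof.
apply/funext=> k; rewrite /th psb_coef; case: k => [|[|k]] /=; by rewrite ?mulr0 ?mulr1.
Qed.

Lemma sig_add (f g : PS) : pssig (f + g) = pssig f + pssig g.
Proof. by apply/funext=> k; rewrite /pssig ps_add_coef mulrDr. Qed.
Lemma sig_opp (f : PS) : pssig (- f) = - pssig f.
Proof. by apply/funext=> k; rewrite /pssig ps_opp_coef mulrN. Qed.
Lemma sig0 : pssig 0 = 0.
Proof. by apply/funext=> k; rewrite /pssig ps_zero_coef mulr0. Qed.
Lemma sig_sub (f g : PS) : pssig (f - g) = pssig f - pssig g.
Proof. by rewrite sig_add sig_opp. Qed.
Lemma sig_sum n (F : 'I_n -> PS) : pssig (\sum_(i < n) F i) = \sum_(i < n) pssig (F i).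
Proof.
elim: n F => [|n IH] F; first by rewrite !big_ord0 sig0.
by rewrite !big_ord_recr sig_add IH.
Qed.
Lemma sig_mul (f g : PS) : pssig (f * g) = pssig f * pssig g.
Proof.
apply/funext=> k; rewrite /pssig !ps_mul_coef mulr_sumr; apply: eq_bigr => i _.
rewrite mulrACA -exprD subnKC //; by rewrite -ltnS.
Qed.
Lemma sig_cst c : pssig (pscst c) = pscst c.
Proof. by apply/funext=> k; case: k => [|k]; rewrite /pssig /= ?mul1r ?mulr0. Qed.
Lemma sig1 : pssig 1 = 1.
Proof. exact: sig_cst. Qed.
Lemma sig_b : pssig psb = - psb.
Proof.
apply/funext=> k; rewrite /pssig ps_opp_coef psb_coef; case: k => [|[|k]] /=;
by rewrite ?mulr0 ?expr1 ?mulr1 ?oppr0.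
Qed.
Lemma sigK (f : PS) : pssig (pssig f) = f.
Proof.
by apply/funext=> k; rewrite /pssig mulrA -exprMn mulrNN mulr1 expr1n mul1r.
Qed.
Lemma sig_th (f : PS) : pssig (th f) = th (pssig f).
Proof. by apply/funext=> k; rewrite /pssig /th mulrCA. Qed.
Lemma sig_exp (f : PS) n : pssig (f ^+ n) = pssig f ^+ n.
Proof. elim: n => [|n IH]; by rewrite ?expr0 ?sig1 // !exprS sig_mul IH. Qed.

Fixpoint invl (g : PS) (k : nat) : seq CC :=
  match k with
  | 0%N => [:: (g 0%N)^-1]
  | k'.+1 => let s := invl g k' in
      rcons s (- (g 0%N)^-1 * \sum_(i < k'.+1) g i.+1 * nth 0 s (k' - i)%N)
  end.

Lemma size_invl g k : size (invl g k) = k.+1.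
Proof. by elim: k => [|k IH] //=; rewrite size_rcons IH. Qed.

Definition psinv (g : PS) : PS := fun j => nth 0 (invl g j) j.

Lemma invl_nth g k j : (j <= k)%N -> nth 0 (invl g k) j = psinv g j.
Proof.
elim: k => [|k IH]; first by rewrite leqn0 => /eqP ->.
rewrite leq_eqVlt => /orP [/eqP -> //| jk].
by rewrite /= nth_rcons size_invl jk IH.
Qed.

Lemma psinv_succ g k : psinv g k.+1 =
  - (g 0%N)^-1 * \sum_(i < k.+1) g i.+1 * psinv g (k - i)%N.
Proof.
rewrite {1}/psinv /= nth_rcons size_invl ltnn eqxx; congr (_ * _).
by apply: eq_bigr => i _; rewrite invl_nth // leq_subr.
Qed.

Lemma psinvP (g : PS) : g 0%N != 0 -> g * psinv g = 1.
Proof.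
move=> g0; apply/funext=> k; rewrite ps_mul_coef; case: k => [|k].
  by rewrite big_ord1 /psinv /= mulfV.
rewrite big_ord_recl /= subn0 psinv_succ mulrA mulrN mulfV // mulN1r.
rewrite [X in _ + X = _](_ : _ = \sum_(i < k.+1) g i.+1 * psinv g (k - i)%N).
  by rewrite addNr.
by apply: eq_bigr => i _; rewrite subSS.
Qed.

Lemma unit_ps (g : PS) : g 0%N != 0 -> exists h : PS, g * h = 1.
Proof. by move=> g0; exists (psinv g); exact: psinvP. Qed.


Lemma ps_mul0_coef (f g : PS) : (f * g) 0%N = f 0%N * g 0%N.
Proof. by rewrite ps_mul_coef big_ord1. Qed.

Lemma aopE (M : abmod) (x : vec M) i :
  aop x i = \sum_j amat i j * x j + psb * th (x i).
Proof. by rewrite /aop psaddE pssumE bder. Qed.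

Lemma lapplyE m n (Phi : linmap m n) x i : lapply Phi x i = \sum_j Phi i j * x j.
Proof. by rewrite /lapply pssumE. Qed.

Definition cfun (M : abmod) (h : 'I_(rk M) -> 'I_(rk M) -> PS) (y : vec M) i : PS :=
  \sum_j pssig (y j) * h i j.

Lemma hformE (M : abmod) h (x y : vec M) :
  hform h x y = \sum_i x i * cfun h y i.
Proof.
rewrite /hform pssumE; apply: eq_bigr => i _; rewrite pssumE /cfun mulr_sumr.
by apply: eq_bigr => j _; rewrite mulrA.
Qed.

Lemma th_exp_b n : th (psb ^+ n) = n%:R * psb ^+ n.
Proof.
elim: n => [|n IH]; first by rewrite expr0 mul0r; exact: th_cst.
by rewrite exprS th_mul th_b IH mulrSr; ring.
Qed.

Definition lc (M : abmod) n (z : 'I_n -> PS) (X : 'I_n -> vec M) : vec M :=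
  fun t => \sum_k z k * X k t.

Lemma aop_lc (M : abmod) n (z : 'I_n -> PS) (X : 'I_n -> vec M) i :
  aop (lc z X) i = \sum_k (z k * aop (X k) i + psb * th (z k) * X k i).
Proof.
rewrite aopE /lc th_sum mulr_sumr.
have -> : \sum_j amat i j * (\sum_k z k * X k j) =
          \sum_k z k * (\sum_j amat i j * X k j).
  rewrite (eq_bigr (fun j => \sum_k amat i j * (z k * X k j))); last by move=> j _; rewrite mulr_sumr.
  rewrite exchange_big /=; apply: eq_bigr => k _; rewrite mulr_sumr.
  by apply: eq_bigr => j _; rewrite mulrCA.
rewrite -big_split /=; apply: eq_bigr => k _; rewrite aopE th_mul; ring.
Qed.

Lemma aop_scale (M : abmod) (s : PS) (x : vec M) i :
  aop (fun t => s * x t) i = s * aop x i + psb * th s * x i.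
Proof.
rewrite !aopE th_mul !mulrDr mulr_sumr.
rewrite (eq_bigr (fun j => s * (amat i j * x j))); last by move=> j _; rewrite mulrCA.
ring.
Qed.

Lemma aop_add (M : abmod) (x y : vec M) i :
  aop (fun t => x t + y t) i = aop x i + aop y i.
Proof.
rewrite !aopE th_add mulrDr addrACA; congr (_ + _); rewrite -big_split /=.
by apply: eq_bigr => j _; rewrite mulrDr.
Qed.

Lemma aop_opp (M : abmod) (x : vec M) i : aop (fun t => - x t) i = - aop x i.
Proof.
rewrite !aopE th_opp mulrN opprD -sumrN; congr (_ + _).
by apply: eq_bigr => j _; rewrite mulrN.
Qed.

Lemma hform_lc (M : abmod) h n1 n2 (z : 'I_n1 -> PS) (X : 'I_n1 -> vec M)
   (w : 'I_n2 -> PS) (Y : 'I_n2 -> vec M) :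
  hform h (lc z X) (lc w Y) =
  \sum_k \sum_l z k * pssig (w l) * hform h (X k) (Y l).
Proof.
rewrite /hform !pssumE /lc.
transitivity (\sum_i \sum_j \sum_k \sum_l
   z k * X k i * (pssig (w l) * pssig (Y l j)) * h i j).
  apply: eq_bigr => i _; rewrite pssumE; apply: eq_bigr => j _.
  rewrite !psmulE sig_sum big_distrlr /= mulr_suml; apply: eq_bigr => k _.
  rewrite mulr_suml; apply: eq_bigr => l _.
  by rewrite sig_mul.
symmetry.
transitivity (\sum_k \sum_l \sum_i \sum_j
   z k * X k i * (pssig (w l) * pssig (Y l j)) * h i j).
  apply: eq_bigr => k _; apply: eq_bigr => l _.
  rewrite pssumE mulr_sumr; apply: eq_bigr => i _; rewrite pssumE mulr_sumr.
  apply: eq_bigr => j _; rewrite !psmulE; ring.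
rewrite (eq_bigr (fun k => \sum_i \sum_l \sum_j
   z k * X k i * (pssig (w l) * pssig (Y l j)) * h i j)); last first.
  by move=> k _; rewrite exchange_big.
rewrite exchange_big /=; apply: eq_bigr => i _.
rewrite (eq_bigr (fun k => \sum_j \sum_l
   z k * X k i * (pssig (w l) * pssig (Y l j)) * h i j)); last first.
  by move=> k _; rewrite exchange_big.
by rewrite exchange_big.
Qed.


Lemma cst_add a b : pscst (a + b) = pscst a + pscst b.
Proof. by apply/funext=> k; case: k => [|k]; rewrite ps_add_coef /= ?addr0. Qed.
Lemma cst_opp a : pscst (- a) = - pscst a.
Proof. by apply/funext=> k; case: k => [|k]; rewrite ps_opp_coef /= ?oppr0. Qed.
Lemma cst_sub a b : pscst (a - b) = pscst a - pscst b.
Proof. by rewrite cst_add cst_opp. Qed.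
Lemma cst_mul a b : pscst (a * b) = pscst a * pscst b.
Proof. by apply/funext=> k; rewrite mulcst_coef; case: k => [|k] /=; rewrite ?mulr0. Qed.
Lemma cst_nat n : pscst n%:R = n%:R.
Proof.
elim: n => [|n IH]; first by apply/funext=> k; case: k.
by rewrite -addn1 natrD cst_add IH natrD.
Qed.
Lemma cst0 : pscst 0 = 0. Proof. by apply/funext=> k; case: k. Qed.
Lemma cst_coef0 c : pscst c 0%N = c. Proof. by []. Qed.
Lemma sign2 n : ((-1) ^+ n * (-1) ^+ n : PS) = 1.
Proof. by rewrite -exprMn mulrNN mulr1 expr1n. Qed.

Lemma hform_scalel (M : abmod) h s (x y : vec M) :
  hform h (fun t => s * x t) y = s * hform h x y.
Proof. rewrite !hformE mulr_sumr; apply: eq_bigr => i _; by rewrite /= mulrA. Qed.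
Lemma hform_addl (M : abmod) h (x x' y : vec M) :
  hform h (fun t => x t + x' t) y = hform h x y + hform h x' y.
Proof. rewrite !hformE -big_split; apply: eq_bigr => i _; by rewrite /= mulrDl. Qed.
Lemma hform_oppl (M : abmod) h (x y : vec M) :
  hform h (fun t => - x t) y = - hform h x y.
Proof. rewrite !hformE -sumrN; apply: eq_bigr => i _; by rewrite /= mulNr. Qed.
Lemma cfun_scale (M : abmod) h s (y : vec M) i :
  cfun h (fun t => s * y t) i = pssig s * cfun h y i.
Proof. rewrite /cfun mulr_sumr; apply: eq_bigr => j _; by rewrite sig_mul mulrA. Qed.
Lemma hform_scaler (M : abmod) h s (x y : vec M) :
  hform h x (fun t => s * y t) = pssig s * hform h x y.
Proof.
rewrite !hformE mulr_sumr; apply: eq_bigr => i _; rewrite cfun_scale; by rewrite mulrCA.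
Qed.
Lemma hform_addr (M : abmod) h (x y y' : vec M) :
  hform h x (fun t => y t + y' t) = hform h x y + hform h x y'.
Proof.
rewrite !hformE -big_split; apply: eq_bigr => i _; rewrite /= /cfun -mulrDr; congr (_ * _).
rewrite -big_split; apply: eq_bigr => j _; by rewrite /= sig_add mulrDl.
Qed.
Lemma hform_oppr (M : abmod) h (x y : vec M) :
  hform h x (fun t => - y t) = - hform h x y.
Proof.
have -> : (fun t => - y t) = (fun t => (-1) * y t) by apply/funext=> t; rewrite mulN1r.
by rewrite hform_scaler sig_opp sig1 mulN1r.
Qed.

Definition eig (M : abmod) (x : vec M) (mu : CC) := forall i, aop x i = pscst mu * psb * x i.

Lemma aop_eig (M : abmod) (x : vec M) mu : eig x mu -> aop x = (fun t => pscst mu * psb * x t).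
Proof. by move=> H; apply/funext=> i; exact: H. Qed.

Lemma hform_eig (M : abmod) h (Hh : is_herm_form h) (x y : vec M) mu nu :
  eig x mu -> eig y nu -> psb * th (hform h x y) = pscst (mu + nu) * psb * hform h x y.
Proof.
case: Hh => HA _ _ ex ey; have := HA x y; rewrite /aE0 bder => ->.
rewrite (aop_eig ex) (aop_eig ey) hform_scalel.
have -> : vopp (fun t => pscst nu * psb * y t) = (fun t => (- (pscst nu * psb)) * y t).
  by apply/funext=> t; rewrite /vopp psoppE mulNr.
rewrite hform_scaler sig_opp sig_mul sig_cst sig_b cst_add; rewrite psaddE; ring.
Qed.

Lemma ode_support (phi : PS) c k :
  psb * th phi = pscst c * psb * phi -> phi k != 0 -> k%:R = c.
Proof.
rewrite [pscst c * _]mulrC -mulrA => /bcancel H nz.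
have := congr1 (fun f : PS => f k) H; rewrite mulcst_coef /th => /eqP.
rewrite -subr_eq0 -mulrBl mulf_eq0 (negbTE nz) orbF subr_eq0 => /eqP.
by [].
Qed.

Lemma prim_part (M : abmod) h (Hh : is_herm_form h) (u : vec M) mu :
  (exists i k, u i k != 0) -> eig u mu -> hform h u u = 0 ->
  exists (y : vec M) mu', [/\ exists i, y i 0%N != 0, eig y mu' & hform h y y = 0].
Proof.
move=> nz eu Huu.
have exP : exists k, [exists i, u i k != 0].
  by case: nz => i [k nz]; exists k; apply/existsP; exists i.
case: (ex_minnP exP) => k0 /existsP [i0 nz0] kmin.
pose y : vec M := fun i k => u i (k + k0)%N.
have uy : u = (fun t => psb ^+ k0 * y t).
  apply/funext=> i; apply/funext=> j; rewrite powb_coef.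
  case: ifP => kj; first by rewrite /y subnK.
  case: (eqVneq (u i j) 0) => // nzj.
  have : (k0 <= j)%N by apply: kmin; apply/existsP; exists i.
  by rewrite kj.
exists y, (mu - k0%:R); split.
- by exists i0; rewrite /y add0n.
- move=> i; apply: (@powbcancel k0).
  have := eu i; rewrite uy aop_scale th_exp_b => H.
  rewrite -[psb ^+ k0 * aop y i](addrK (psb * (k0%:R * psb ^+ k0) * y i)) H.
  rewrite cst_sub cst_nat; ring.
- move: Huu; rewrite uy hform_scalel hform_scaler sig_exp sig_b.
  rewrite exprNn => H0.
  have H1 : psb^+k0 * (psb^+k0 * ((-1)^+k0 * hform h y y)) = psb^+k0 * (psb^+k0 * 0).
    by rewrite !mulr0 -H0; ring.
  move/powbcancel/powbcancel: H1 => H2.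
  by rewrite -[hform h y y]mul1r -(sign2 k0) -mulrA H2 mulr0.
Qed.


Definition ev n (i : 'I_n) : 'I_n -> PS := fun t => (t == i)%:R.

Lemma sum_ev n (i : 'I_n) (x : 'I_n -> PS) : \sum_t x t * ev i t = x i.
Proof.
rewrite (bigD1 i) //= /ev eqxx mulr1 big1 ?addr0 // => t /negbTE ->.
by rewrite mulr0.
Qed.
Lemma sum_evl n (i : 'I_n) (x : 'I_n -> PS) : \sum_t ev i t * x t = x i.
Proof. by rewrite -[RHS](sum_ev i x); apply: eq_bigr => t _; rewrite mulrC. Qed.

Lemma sum_lift n (i : 'I_n.+1) (F : 'I_n.+1 -> PS) :
  \sum_t F t = F i + \sum_j F (lift i j).
Proof. by rewrite (bigD1_ord i). Qed.

Lemma lapply_sum m n (Phi : linmap m n) p (F : 'I_p -> 'I_n -> PS) l :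
  lapply Phi (fun t => \sum_k F k t) l = \sum_k lapply Phi (F k) l.
Proof.
rewrite !lapplyE (eq_bigr (fun t => \sum_k Phi l t * F k t)); last by move=> t _; rewrite mulr_sumr.
rewrite exchange_big /=; apply: eq_bigr => k _; by rewrite lapplyE.
Qed.
Lemma lapply_scale m n (Phi : linmap m n) s (x : 'I_n -> PS) l :
  lapply Phi (fun t => s * x t) l = s * lapply Phi x l.
Proof. by rewrite !lapplyE mulr_sumr; apply: eq_bigr => t _; rewrite mulrCA. Qed.
Lemma lapply_add m n (Phi : linmap m n) (x y : 'I_n -> PS) l :
  lapply Phi (fun t => x t + y t) l = lapply Phi x l + lapply Phi y l.
Proof. by rewrite !lapplyE -big_split; apply: eq_bigr => t _; rewrite /= mulrDr. Qed.
Lemma lapply_opp m n (Phi : linmap m n) (x : 'I_n -> PS) l :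
  lapply Phi (fun t => - x t) l = - lapply Phi x l.
Proof. by rewrite !lapplyE -sumrN; apply: eq_bigr => t _; rewrite mulrN. Qed.

Lemma lc_comb (M : abmod) n (s1 s2 : 'I_n -> PS) a (X : 'I_n -> vec M) t :
  lc (fun j => s1 j + a * s2 j) X t = lc s1 X t + a * lc s2 X t.
Proof.
rewrite /lc mulr_sumr -big_split; apply: eq_bigr => j _; rewrite /=; ring.
Qed.

Lemma hform_uniq (M : abmod) h (Hh : is_herm_form h) (c : vec M) (y1 y2 : vec M) :
  (forall x : vec M, hform h x y1 = pssum (fun i => psmul (x i) (c i))) ->
  (forall x : vec M, hform h x y2 = pssum (fun i => psmul (x i) (c i))) ->
  y1 = y2.
Proof.
case: Hh => _ _ HN H1 H2; case: (HN c) => y0 [_ U].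
by rewrite (U _ H1) (U _ H2).
Qed.

Lemma shift_b (f : PS) : f 0%N = 0 -> f = psb * (fun k => f k.+1).
Proof. move=> f0; apply/funext=> k; rewrite mulb_coef; by case: k. Qed.

Lemma ps_sum_coef0 n (F : 'I_n -> PS) : (\sum_i F i) 0%N = \sum_i F i 0%N.
Proof. exact: ps_sum_coef. Qed.

Lemma hform_vopp_eig (M : abmod) h (x w : vec M) nu :
  eig w nu -> hform h x (vopp (aop w)) = pscst nu * psb * hform h x w.
Proof.
move=> ew; rewrite (aop_eig ew).
have -> : vopp (fun t => pscst nu * psb * w t) = (fun t => (- (pscst nu * psb)) * w t).
  by apply/funext=> t; rewrite /vopp psoppE mulNr.
by rewrite hform_scaler sig_opp sig_mul sig_cst sig_b mulrN opprK.
Qed.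

Lemma hform_sum2 (M : abmod) h (x y : vec M) :
  hform h x y = \sum_i \sum_j x i * pssig (y j) * h i j.
Proof. by rewrite /hform pssumE; apply: eq_bigr => i _; rewrite pssumE. Qed.

Lemma lapply_ev2 m n (f : 'I_m -> 'I_n) (g : 'I_m -> PS) (j : 'I_n) (x : 'I_n -> PS) k :
  lapply (fun k t => ev (f k) t - g k * ev j t) x k = x (f k) - g k * x j.
Proof.
rewrite lapplyE (eq_bigr (fun t => ev (f k) t * x t - g k * (ev j t * x t))).
  by rewrite sumrB -mulr_sumr !sum_evl.
by move=> t _; rewrite mulrBl mulrA.
Qed.


Lemma constructD (m : nat) (A : 'I_m.+2 -> 'I_m.+2 -> PS) h (y : 'I_m.+2 -> PS) mu :
  @is_herm_form (ABMod A) h -> (exists i, y i 0%N != 0) -> @eig (ABMod A) y mu ->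
  @hform (ABMod A) h y y = 0 ->
  exists F1 Fn1 : vec (ABMod A) -> Prop,
    [/\ is_submod F1 /\ is_normal F1 /\ sub_rank F1 1,
        is_submod Fn1 /\ is_normal Fn1 /\ sub_rank Fn1 (m.+2 - 1),
        (forall x, F1 x -> Fn1 x),
        (exists Q : abmod,
            quot_iso (fun _ => True) Fn1 Q /\ sub_iso (adjoint Q) F1) &
        (exists Q' : abmod, quot_iso Fn1 F1 Q' /\ is_hermitian Q')].
Proof.
set E := ABMod A => Hh yprim ey Hyy.
have Hh' := Hh; case: Hh' => HA HS HN.
pose c : vec E := fun i => cfun h y i.
have Hc : forall x : vec E, hform h x y = \sum_i x i * c i by move=> x; exact: hformE.
have [i0 ci0] : exists i0, c i0 0%N != 0.
  case: (boolP [exists i, c i 0%N != 0]) => [/existsP //|].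
  rewrite negb_exists => /forallP call.
  have c0 : forall i, c i 0%N = 0 by move=> i; move: (call i); rewrite negbK => /eqP.
  pose d : vec E := fun i k => c i k.+1.
  have cd : forall i, c i = psb * d i by move=> i; exact: shift_b.
  case: (HN d) => z [Hz _].
  pose z' : vec E := fun t => (- psb) * z t.
  have Hz' : forall x : vec E, hform h x z' = pssum (fun i => psmul (x i) (c i)).
    move=> x; rewrite hform_scaler Hz sig_opp sig_b opprK !pssumE mulr_sumr.
    by apply: eq_bigr => i _; rewrite cd !psmulE mulrCA.
  have Hy' : forall x : vec E, hform h x y = pssum (fun i => psmul (x i) (c i)).
    by move=> x; rewrite Hc pssumE.
  have yz := hform_uniq Hh Hy' Hz'.
  case: yprim => i; rewrite yz /z' ps_mul0_coef ps_opp_coef psb_coef /=.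
  by rewrite oppr0 mul0r eqxx.
have [ci Hci] := unit_ps ci0.
have [j1 yj1] : exists j1, y (lift i0 j1) 0%N != 0.
  case: (boolP [exists j, y (lift i0 j) 0%N != 0]) => [/existsP //|].
  rewrite negb_exists => /forallP yall.
  have y0 : forall j, y (lift i0 j) 0%N = 0 by move=> j; move: (yall j); rewrite negbK => /eqP.
  have := congr1 (fun f : PS => f 0%N) Hyy; rewrite Hc ps_sum_coef ps_zero_coef.
  rewrite (bigD1_ord i0) //= ps_mul0_coef big1; last by move=> j _; rewrite ps_mul0_coef y0 mul0r.
  rewrite addr0 => /eqP; rewrite mulf_eq0 (negbTE ci0) orbF => /eqP yi00.
  case: yprim => i; case: (unliftP i0 i) => [j ->|->]; first by rewrite y0 eqxx.
  by rewrite yi00 eqxx.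
set j0 := lift i0 j1.
have [yi Hyi] := unit_ps yj1.
have Hiy : yi * y j0 = 1 by rewrite mulrC.
have Hic : ci * c i0 = 1 by rewrite mulrC.
pose bas (j : 'I_m.+1) : vec E := fun t => ev (lift i0 j) t - c (lift i0 j) * ci * ev i0 t.
have bas_lift : forall j j', bas j (lift i0 j') = (j' == j)%:R.
  move=> j j'; rewrite /bas /ev (inj_eq (@lift_inj _ i0)).
  by rewrite [lift i0 j' == i0]eq_sym (negbTE (neq_lift i0 j')) mulr0 subr0.
have bas_i0 : forall j, bas j i0 = - (c (lift i0 j) * ci).
  by move=> j; rewrite /bas /ev (negbTE (neq_lift i0 j)) eqxx mulr1 sub0r.
have lc_lift : forall s j', lc s bas (lift i0 j') = s j'.
  move=> s j'; rewrite /lc -[RHS](sum_ev j' s); apply: eq_bigr => j _.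
  by rewrite bas_lift /ev eq_sym.
have lc_i0 : forall s, lc s bas i0 = - (\sum_j s j * c (lift i0 j)) * ci.
  move=> s; rewrite /lc mulNr mulr_suml -sumrN; apply: eq_bigr => j _.
  rewrite bas_i0; ring.
pose Fn1 (x : vec E) := \sum_i x i * c i = 0.
have Fn1E : forall x, Fn1 x <-> hform h x y = 0 by move=> x; rewrite /Fn1 Hc.
have Fn1_lc : forall s, Fn1 (lc s bas).
  move=> s; rewrite /Fn1 (sum_lift i0).
  rewrite (eq_bigr (fun j => s j * c (lift i0 j))); last by move=> j _; rewrite lc_lift.
  rewrite lc_i0 -mulrA Hic mulr1; exact: addNr.
have rep : forall x, Fn1 x -> x = lc (fun j => x (lift i0 j)) bas.
  move=> x Fx; apply/funext=> t; case: (unliftP i0 t) => [j ->|->]; first by rewrite lc_lift.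
  rewrite lc_i0; move: Fx; rewrite /Fn1 (sum_lift i0) => /eqP; rewrite addr_eq0 => /eqP Fx.
  by rewrite -Fx -mulrA Hci mulr1.
have indep : forall s, lc s bas = (fun _ => 0) -> s = (fun _ => 0).
  move=> s H; apply/funext=> j; have := congr1 (fun f => f (lift i0 j)) H.
  by rewrite /= lc_lift.
have Fn1y : Fn1 y by apply/Fn1E.
have Fn1_aop : forall x, Fn1 x -> Fn1 (aop x).
  move=> x /Fn1E Hx; apply/Fn1E; have := HA x y; rewrite Hx /aE0 bder th0 mulr0.
  by rewrite (hform_vopp_eig _ _ ey) Hx mulr0 psaddE addr0.
have Fn1_add : forall x x', Fn1 x -> Fn1 x' -> Fn1 (fun t => x t + x' t).
  move=> x x'; rewrite /Fn1 => H1 H2.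
  by rewrite (eq_bigr (fun i => x i * c i + x' i * c i)) ?big_split /= ?H1 ?H2 ?addr0 // => i _; rewrite mulrDl.
have Fn1_scale : forall s x, Fn1 x -> Fn1 (fun t => s * x t).
  move=> s x; rewrite /Fn1 => H1.
  by rewrite (eq_bigr (fun i => s * (x i * c i))) -?mulr_sumr ?H1 ?mulr0 // => i _; rewrite mulrA.
have Fn1_0 : Fn1 (fun _ => 0) by rewrite /Fn1 big1 // => i _; rewrite mul0r.
pose sg (k : 'I_m) : 'I_m.+2 := lift i0 (lift j1 k).
pose ext (z : 'I_m -> PS) (j : 'I_m.+1) : PS := if unlift j1 j is Some k then z k else 0.
pose L (z : 'I_m -> PS) : vec E := lc (ext z) bas.
pose Lb (k : 'I_m) : vec E := bas (lift j1 k).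
have LE : forall z, L z = lc z Lb.
  move=> z; apply/funext=> t; rewrite /L /lc (sum_lift j1) /ext unlift_none mul0r add0r.
  by apply: eq_bigr => k _; rewrite liftK.
pose Psi : linmap m m.+2 := fun k t => ev (sg k) t - y (sg k) * yi * ev j0 t.
have PsiE : forall x k, lapply Psi x k = x (sg k) - y (sg k) * yi * x j0.
  move=> x k; rewrite lapplyE (eq_bigr (fun t => ev (sg k) t * x t - y (sg k) * yi * (ev j0 t * x t))).
    by rewrite sumrB -mulr_sumr !sum_evl.
  by move=> t _; rewrite /Psi mulrBl mulrA.
have L_lift : forall z j, L z (lift i0 j) = ext z j by move=> z j; exact: lc_lift.
have PsiL : forall z, lapply Psi (L z) = z.
  move=> z; apply/funext=> k; rewrite PsiE /sg /j0 !L_lift /ext liftK unlift_none.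
  by rewrite mulr0 subr0.
have L_Fn1 : forall z, Fn1 (L z) by move=> z; exact: Fn1_lc.
have Psi_y : forall s k, lapply Psi (fun t => s * y t) k = 0.
  move=> s k; rewrite PsiE.
  have -> : y (sg k) * yi * (s * y j0) = s * y (sg k) * (yi * y j0) by ring.
  by rewrite Hiy mulr1 subrr.
have decomp : forall x, Fn1 x -> x = (fun t => L (lapply Psi x) t + (x j0 * yi) * y t).
  move=> x Fx; apply/funext=> t.
  have E1 : x t = lc (fun j => x (lift i0 j)) bas t by exact: (congr1 (fun f => f t) (rep x Fx)).
  have E2 : y t = lc (fun j => y (lift i0 j)) bas t by exact: (congr1 (fun f => f t) (rep y Fn1y)).
  rewrite E1 E2 /L -lc_comb; congr (lc _ bas t); apply/funext=> j.
  case: (unliftP j1 j) => [k ->|->]; rewrite /ext ?liftK ?unlift_none.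
    rewrite PsiE /sg; ring.
  by rewrite add0r -mulrA Hiy mulr1.
pose A' : 'I_m -> 'I_m -> PS := fun l k => lapply Psi (aop (Lb k)) l.
pose Q' := ABMod A'.
have PsiLb : forall k l, lapply Psi (Lb k) l = ev k l.
  move=> k l; have -> : Lb k = L (ev k).
    by rewrite LE; apply/funext=> t; rewrite /lc sum_evl.
  by rewrite PsiL.
have morph : forall x, Fn1 x -> lapply Psi (aop x) = @aop Q' (lapply Psi x).
  move=> x Fx; have xe := decomp x Fx.
  set z := lapply Psi x in xe *; set a := x j0 * yi in xe.
  have ax : aop x = (fun t => aop (L z) t + (a * (pscst mu * psb) + psb * th a) * y t).
    rewrite {1}xe; apply/funext=> t; rewrite aop_add aop_scale ey; ring.
  apply/funext=> l; rewrite ax lapply_add Psi_y addr0 LE.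
  rewrite (_ : aop (lc z Lb) = fun t => \sum_k (z k * aop (Lb k) t + psb * th (z k) * Lb k t));
    last by apply/funext=> t; rewrite aop_lc.
  rewrite lapply_sum aopE /=.
  rewrite (eq_bigr (fun k => A' l k * z k + psb * th (z k) * ev k l)); last first.
    by move=> k _; rewrite lapply_add lapply_scale lapply_scale PsiLb mulrC.
  rewrite big_split /=; congr (_ + _).
  by rewrite (eq_bigr (fun k => ev l k * (psb * th (z k)))) ?sum_evl // => k _; rewrite /ev eq_sym mulrC.
pose h' : 'I_m -> 'I_m -> PS := fun k l => hform h (Lb k) (Lb l).
have H'eq : forall z w, @hform Q' h' z w = hform h (L z) (L w).
  by move=> z w; rewrite hform_sum2 !LE hform_lc.
have HL_y : forall z, hform h (L z) y = 0 by move=> z; apply/Fn1E.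
have Hy_L : forall z, hform h y (L z) = 0 by move=> z; rewrite HS HL_y sig0.
have Psi_y1 : forall k, lapply Psi y k = 0.
  by move=> k; rewrite PsiE -mulrA Hiy mulr1 subrr.
have L_aop' : forall z, exists a, L (@aop Q' z) = (fun t => aop (L z) t + a * y t).
  move=> z; have Fx := Fn1_aop _ (L_Fn1 z).
  have xe := decomp _ Fx; rewrite morph ?PsiL // in xe.
  exists (- (aop (L z) j0 * yi)); apply/funext=> t.
  have := congr1 (fun f => f t) xe => /= ->; ring.
have L_opp : forall v : vec Q', L (@vopp Q' v) = (fun t => (-1) * L v t).
  move=> v; rewrite !LE; apply/funext=> t; rewrite /lc mulr_sumr.
  by apply: eq_bigr => k _; rewrite /vopp psoppE; ring.
have HA' : forall z w, aE0 (@hform Q' h' z w) =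
     psadd (@hform Q' h' (aop z) w) (@hform Q' h' z (vopp (aop w))).
  move=> z w; rewrite !H'eq L_opp.
  case: (L_aop' z) => a1 ->; case: (L_aop' w) => a2 ->.
  rewrite hform_addl hform_scalel Hy_L mulr0 addr0.
  have -> : (fun t => (-1) * (aop (L w) t + a2 * y t)) =
            (fun t => vopp (aop (L w)) t + (- a2) * y t).
    by apply/funext=> t; rewrite /vopp psoppE; ring.
  by rewrite hform_addr hform_scaler HL_y mulr0 addr0 HA.
have HS' : forall z w, @hform Q' h' w z = pssig (@hform Q' h' z w).
  by move=> z w; rewrite !H'eq HS.
have HN' : forall d : vec Q', exists w : vec Q',
    (forall z : vec Q', @hform Q' h' z w = pssum (fun i => psmul (z i) (d i))) /\
    (forall w2 : vec Q', (forall z : vec Q', @hform Q' h' z w2 = pssum (fun i => psmul (z i) (d i))) -> w2 = w).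
  move=> d.
  pose phi : vec E := fun t => \sum_k d k * Psi k t.
  have Hphi : forall x : vec E, pssum (fun t => psmul (x t) (phi t)) = \sum_k lapply Psi x k * d k.
    move=> x; rewrite pssumE /phi.
    rewrite (eq_bigr (fun t => \sum_k x t * (d k * Psi k t))); last by move=> t _; rewrite psmulE mulr_sumr.
    rewrite exchange_big /=; apply: eq_bigr => k _; rewrite lapplyE mulr_suml.
    by apply: eq_bigr => t _; ring.
  case: (HN phi) => w' [Hw' _].
  have w'F : Fn1 w'.
    apply/Fn1E; rewrite HS Hw' Hphi big1 ?sig0 // => k _; by rewrite Psi_y1 mul0r.
  have Lw : L (lapply Psi w') = (fun t => w' t + (- (w' j0 * yi)) * y t).
    apply/funext=> t; have := congr1 (fun f => f t) (decomp w' w'F) => /= ->; ring.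
  have Hw : forall z : vec Q', @hform Q' h' z (lapply Psi w') = pssum (fun i => psmul (z i) (d i)).
    move=> z; rewrite H'eq Lw hform_addr hform_scaler HL_y mulr0 addr0 Hw' Hphi PsiL pssumE.
    by [].
  exists (lapply Psi w'); split => // w2 Hw2.
  pose D : vec E := fun t => L w2 t + (-1) * L (lapply Psi w') t.
  have HD : forall z, hform h (L z) D = 0.
    by move=> z; rewrite hform_addr hform_scaler -!H'eq Hw Hw2 sig_opp sig1 mulN1r subrr.
  have DF : Fn1 D by apply: Fn1_add; [exact: L_Fn1 | apply: Fn1_scale; exact: L_Fn1].
  have HyD : hform h y D = 0 by rewrite HS (proj1 (Fn1E D) DF) sig0.
  have HxD : forall x, Fn1 x -> hform h x D = 0.
    move=> x Fx; rewrite (decomp x Fx) hform_addl hform_scalel HD HyD mulr0 addr0 //.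
  pose beta := hform h (ev i0) D * ci.
  have Hbeta : forall x : vec E, hform h x D = pssum (fun t => psmul (x t) (beta * c t)).
    move=> x; set g := \sum_t x t * c t.
    pose x' : vec E := fun t => x t + (- (g * ci)) * ev i0 t.
    have Fx' : Fn1 x'.
      rewrite /Fn1 /x' (eq_bigr (fun t => x t * c t + (- (g * ci)) * (ev i0 t * c t))).
        by rewrite big_split /= -mulr_sumr sum_evl mulNr -mulrA Hic mulr1 subrr.
      by move=> t _; rewrite mulrDl mulrA.
    have ex : x = (fun t => x' t + (g * ci) * ev i0 t) by apply/funext=> t; rewrite /x'; ring.
    rewrite {1}ex hform_addl hform_scalel (HxD x' Fx') add0r pssumE.
    rewrite (eq_bigr (fun t => beta * (x t * c t))); last by move=> t _; rewrite psmulE mulrCA.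
    by rewrite -mulr_sumr -/g /beta; ring.
  have Hsy : forall x : vec E, hform h x (fun t => pssig beta * y t) =
                               pssum (fun t => psmul (x t) (beta * c t)).
    move=> x; rewrite hform_scaler sigK Hc pssumE mulr_sumr; apply: eq_bigr => t _.
    by rewrite psmulE mulrCA.
  have DE := hform_uniq Hh Hbeta Hsy.
  apply/funext=> k; apply/eqP; rewrite -subr_eq0; apply/eqP.
  have := congr1 (fun f => lapply Psi f k) DE; rewrite /= Psi_y /D lapply_add lapply_scale !PsiL.
  by rewrite mulN1r.
have hermQ' : is_hermitian Q' by exists h'; split.
pose F1 (x : vec E) := exists s, x = (fun t => s * y t).
have F1Fn1 : forall x, F1 x -> Fn1 x by move=> x [s ->]; exact: Fn1_scale.
have y_inj : forall s, s * y j0 = 0 -> s = 0.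
  by move=> s H; rewrite -[s]mulr1 -Hyi mulrA H mul0r.
exists F1, Fn1; split.
- split; [|split].
  + split.
    * by exists 0; apply/funext=> t; rewrite mul0r.
    * move=> x x' [s ->] [s' ->]; exists (s + s'); apply/funext=> t.
      by rewrite /vadd psaddE mulrDl.
    * move=> s x [s' ->]; exists (s * s'); apply/funext=> t.
      by rewrite /vscale psmulE mulrA.
    * move=> x [s ->]; exists (s * (pscst mu * psb) + psb * th s); apply/funext=> t.
      rewrite aop_scale ey; ring.
  + exists m.+1, (fun j t => ev (lift j0 j) t - y (lift j0 j) * yi * ev j0 t); split.
    * move=> z; exists (fun t => if unlift j0 t is Some j then z j else 0).
      apply/funext=> j; rewrite lapply_ev2 liftK unlift_none mulr0 subr0 //.
    * move=> x; split.
        move=> [s ->]; apply/funext=> j; rewrite lapply_ev2.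
        have -> : y (lift j0 j) * yi * (s * y j0) = s * y (lift j0 j) * (yi * y j0) by ring.
        by rewrite Hiy mulr1 subrr.
      move=> H; exists (x j0 * yi); apply/funext=> t.
      case: (unliftP j0 t) => [j ->|->]; last by rewrite -mulrA Hiy mulr1.
      have := congr1 (fun f => f j) H; rewrite lapply_ev2 /= => /eqP.
      by rewrite subr_eq0 => /eqP ->; ring.
  + exists (fun _ => y); split.
    * by move=> _; exists 1; apply/funext=> t; rewrite mul1r.
    * move=> x; split.
        by move=> [s ->]; exists (fun _ => s); apply/funext=> t; rewrite pssumE big_ord1.
      by move=> [s ->]; exists (s ord0); apply/funext=> t; rewrite pssumE big_ord1.
    * move=> s H; apply/funext=> i; rewrite ord1.
      have := congr1 (fun f => f j0) H; rewrite /= pssumE big_ord1 => H0.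
      exact: y_inj.
- split; [|split].
  + split.
    * exact: Fn1_0.
    * move=> x x' H1 H2; exact: Fn1_add.
    * move=> s x H1; exact: Fn1_scale.
    * exact: Fn1_aop.
  + exists 1%N, (fun _ t => c t); split.
    * move=> z; exists (fun t => (z 0 * ci) * ev i0 t); apply/funext=> i.
      rewrite ord1 lapplyE (eq_bigr (fun t => z 0 * ci * (ev i0 t * c t))).
        by rewrite -mulr_sumr sum_evl -mulrA Hic mulr1.
      by move=> t _; ring.
    * move=> x; split.
        move=> Fx; apply/funext=> i; rewrite lapplyE -[RHS]Fx.
        by apply: eq_bigr => t _; rewrite mulrC.
      move=> H; have := congr1 (fun f => f ord0) H; rewrite /= lapplyE => H0.
      rewrite /Fn1 -[RHS]H0; apply: eq_bigr => t _; exact: mulrC.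
  + exists bas; split.
    * move=> j; have -> : bas j = lc (ev j) bas.
        by apply/funext=> t; rewrite /lc sum_evl.
      exact: Fn1_lc.
    * move=> x; split.
        move=> Fx; exists (fun j => x (lift i0 j)); rewrite {1}(rep x Fx).
        by apply/funext=> t; rewrite pssumE.
      move=> [s ->]; have -> : (fun k => pssum (fun i => psmul (s i) (bas i k))) = lc s bas.
        by apply/funext=> t; rewrite pssumE.
      exact: Fn1_lc.
    * move=> s H; apply: indep; apply/funext=> t; have := congr1 (fun f => f t) H; by rewrite /= pssumE.
- exact: F1Fn1.
- have Hlx : forall x j, lapply (fun (_ : 'I_1) t => c t) x j = hform h x y.
    by move=> x j; rewrite lapplyE Hc; apply: eq_bigr => t _; rewrite mulrC.
  exists (Elem (- mu)); split.
  + exists (fun _ t => c t); split.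
    * move=> x _; apply/funext=> i; rewrite Hlx aopE big_ord1 Hlx /=.
      have := HA x y; rewrite /aE0 bder (hform_vopp_eig _ _ ey) psaddE => H.
      rewrite -[hform h (aop x) y](addrK (pscst mu * psb * hform h x y)) -H.
      by rewrite psmulE cst_opp Hlx; ring.
    * move=> z; exists (fun t => (z 0 * ci) * ev i0 t); split => //; apply/funext=> i.
      rewrite ord1 lapplyE (eq_bigr (fun t => z 0 * ci * (ev i0 t * c t))).
        by rewrite -mulr_sumr sum_evl -mulrA Hic mulr1.
      by move=> t _; ring.
    * move=> x _; split.
        move=> H; have := congr1 (fun f => f ord0) H; rewrite /= Hlx => H0.
        by apply/Fn1E.
      by move=> /Fn1E Fx; apply/funext=> i; rewrite Hlx Fx.
  + exists (fun t _ => y t); split.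
    * move=> x; apply/funext=> t.
      have -> : lapply (fun t (_ : 'I_1) => y t) x = (fun t => x ord0 * y t).
        by apply/funext=> t'; rewrite lapplyE big_ord1 mulrC.
      rewrite aop_scale ey lapplyE big_ord1 aopE big_ord1 /=.
      rewrite !psoppE opprK psmulE sig_mul sig_cst sig_b cst_opp; ring.
    * move=> x H; apply/funext=> i; rewrite ord1.
      have := congr1 (fun f => f j0) H; rewrite /= lapplyE big_ord1 => H0.
      by apply: y_inj; rewrite mulrC.
    * move=> z; split.
        move=> [s ->]; exists (fun _ => s); apply/funext=> t; rewrite lapplyE big_ord1.
        exact: mulrC.
      move=> [x <-]; exists (x ord0); apply/funext=> t; rewrite lapplyE big_ord1.
      exact: mulrC.
- exists Q'; split; last exact: hermQ'.
  exists Psi; split.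
  + move=> x Fx; exact: morph.
  + move=> z; exists (L z); split; [exact: L_Fn1 | exact: PsiL].
  + move=> x Fx; split.
      move=> H0; exists (x j0 * yi); rewrite {1}(decomp x Fx).
      have -> : lapply Psi x = (fun _ => 0) by rewrite H0.
      apply/funext=> t; rewrite /L /lc big1 ?add0r // => j _.
      by rewrite /ext; case: (unlift j1 j) => [k|]; rewrite mul0r.
    by move=> [s ->]; apply/funext=> k; exact: Psi_y.
Qed.


Lemma quad_root (A B C : CC) : C != 0 -> exists b : CC, A + b * B + b ^+ 2 * C = 0.
Proof.
move=> C0; pose r := sqrtC (B ^+ 2 - 4 * A * C).
have r2 : r ^+ 2 = B ^+ 2 - 4 * A * C by exact: sqrtCK.
exists ((r - B) / (2 * C)).
have h2 : (2 : CC) != 0 by rewrite pnatr_eq0.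
apply/eqP; rewrite -(mulIr_eq0 _ (mulIf (mulf_neq0 (mulf_neq0 h2 h2) C0))).
have -> : (A + (r - B) / (2 * C) * B + ((r - B) / (2 * C)) ^+ 2 * C) * (2 * 2 * C) =
          (r ^+ 2 - B ^+ 2 + 4 * A * C) * (C / C).
  by field.
by rewrite r2; apply/eqP; ring.
Qed.

Lemma extract (M : abmod) f (F : vec M -> Prop) : is_normal F -> sub_iso (Elem f) F ->
  exists v : vec M, [/\ eig v f, (forall x, F x <-> exists s, x = (fun t => s * v t))
                      & exists i, v i 0%N != 0].
Proof.
move=> [p [Psi [Psurj Pker]]] [Phi [Pm Pinj Pim]].
pose v : vec M := fun t => Phi t ord0.
have Phiv : forall x : vec (Elem f), lapply Phi x = (fun t => x ord0 * v t).
  by move=> x; apply/funext=> t; rewrite lapplyE big_ord1 mulrC.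
have Fv : forall x, F x <-> exists s, x = (fun t => s * v t).
  move=> x; rewrite Pim; split => [[x' <-]|[s ->]]; first by exists (x' ord0); rewrite Phiv.
  by exists (fun _ => s); rewrite Phiv.
have v1 : (fun t => 1 * v t) = v by apply/funext=> t; rewrite mul1r.
have ev' : eig v f.
  move=> t; have := congr1 (fun g => g t) (Pm (fun _ => 1)).
  rewrite !Phiv v1 /= aopE big_ord1 /= => <-.
  by rewrite mulr1 th_cst mulr0 addr0 psmulE.
exists v; split; [exact: ev' | exact: Fv |]; case: (boolP [exists i, v i 0%N != 0]) => [/existsP //|].
rewrite negb_exists => /forallP vall.
have v0 : forall i, v i 0%N = 0 by move=> i; move: (vall i); rewrite negbK => /eqP.
exfalso.
pose z : vec M := fun t k => v t k.+1.
have vz : v = (fun t => psb * z t) by apply/funext=> t; exact: shift_b.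
have Fv1 : F v by apply/Fv; exists 1; rewrite v1.
have Psiv := proj1 (Pker v) Fv1.
have Fz : F z.
  apply/Pker; apply/funext=> k; apply: bcancel; rewrite mulr0 -lapply_scale -vz.
  exact: (congr1 (fun g => g k) Psiv).
case: (proj1 (Fv z) Fz) => s zs.
have Hu : (1 - psb * s) 0%N != 0.
  by rewrite ps_sub_coef ps_mul0_coef psb_coef /= mul0r subr0 oner_eq0.
case: (unit_ps Hu) => u Hu'.
have vzero : forall t, v t = 0.
  move=> t; have e1 : v t = psb * (s * v t).
    by rewrite {1}vz /= zs.
  have : (1 - psb * s) * v t = 0 by rewrite mulrBl mul1r {1}e1; ring.
  move=> H; have -> : v t = u * ((1 - psb * s) * v t) by rewrite mulrA [u * _]mulrC Hu' mul1r.
  by rewrite H mulr0.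
have := Pinj (fun _ => 1).
rewrite Phiv (_ : (fun t => 1 * v t) = (fun _ => ps0)); last first.
  by apply/funext=> t; rewrite vzero mulr0.
move=> /(_ erefl) /(congr1 (fun g => g ord0)) /= /eqP.
by rewrite oner_eq0.
Qed.

Lemma eig_powb (M : abmod) (x : vec M) f p :
  eig x f -> eig (fun t => psb ^+ p * x t) (f + p%:R).
Proof. by move=> ex t; rewrite aop_scale ex th_exp_b cst_add cst_nat; ring. Qed.

Lemma eig_lin (M : abmod) (x z : vec M) mu (be : CC) :
  eig x mu -> eig z mu -> eig (fun t => x t + pscst be * z t) mu.
Proof.
move=> ex ez t; rewrite (aop_add x (fun t => pscst be * z t)) aop_scale ex ez th_cst.
ring.
Qed.

Lemma hform_sq_b (M : abmod) h (x : vec M) p :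
  hform h (fun t => psb ^+ p * x t) (fun t => psb ^+ p * x t) =
  psb ^+ p * (psb ^+ p * ((-1) ^+ p * hform h x x)).
Proof. rewrite hform_scalel hform_scaler sig_exp sig_b [(- psb) ^+ p]exprNn; ring. Qed.

Lemma nz_coef (f : PS) : f != 0 -> exists k, f k != 0.
Proof.
move=> nz; case: (pselect (exists k, f k != 0)) => // Hn; exfalso.
move/eqP: nz; apply; apply/funext=> k; case: (eqVneq (f k) 0) => // nzk.
by exfalso; apply: Hn; exists k.
Qed.

Lemma get_iso (M : abmod) h (Hh : is_herm_form h) (F G : vec M -> Prop) (v w : vec M) f g (d : int) :
  eig v f -> eig w g ->
  (forall x, F x <-> exists s, x = (fun t => s * v t)) ->
  (forall x, G x <-> exists s, x = (fun t => s * w t)) ->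
  (exists i, v i 0%N != 0) -> (exists i, w i 0%N != 0) ->
  f = g + d%:~R -> ~ (forall x, F x <-> G x) ->
  exists (y : vec M) mu, [/\ exists i, y i 0%N != 0, eig y mu & hform h y y = 0].
Proof.
move=> ev ew Fv Gw vprim wprim fd FG.
case: (eqVneq (hform h v v) 0) => Hvv; first by exists v, f.
case: (eqVneq (hform h w w) 0) => Hww; first by exists w, g.
suff key : forall p q : nat, f + p%:R = g + q%:R -> (p = 0 \/ q = 0)%N ->
  exists (y : vec M) mu, [/\ exists i, y i 0%N != 0, eig y mu & hform h y y = 0].
  case: d fd => p fd.
    by apply: (key 0%N p) => //; [rewrite fd addr0 | left].
  by apply: (key p.+1 0%N) => //; [rewrite fd addr0 -addrA addNr addr0 | right].
move=> p q fpq pq0.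
pose mu := f + p%:R.
pose X : vec M := fun t => psb ^+ p * v t.
pose Z : vec M := fun t => psb ^+ q * w t.
have eX : eig X mu by exact: eig_powb.
have eZ : eig Z mu by rewrite /mu fpq; exact: eig_powb.
have HZZ : hform h Z Z != 0.
  apply/eqP; rewrite /Z hform_sq_b => H0.
  have H1 : psb ^+ q * (psb ^+ q * ((-1) ^+ q * hform h w w)) = psb ^+ q * (psb ^+ q * 0).
    by rewrite H0 !mulr0.
  move/powbcancel/powbcancel: H1 => H2; move/eqP: Hww; apply.
  by rewrite -[hform h w w]mul1r -(sign2 q) -mulrA H2 mulr0.
case: (nz_coef HZZ) => k0 Hk0.
case: (quad_root (hform h X X k0) (hform h X Z k0 + hform h Z X k0) Hk0) => be Hbe.
pose u : vec M := fun t => X t + pscst be * Z t.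
have eu : eig u mu by exact: eig_lin.
have Huu : hform h u u = pscst be ^+ 2 * hform h Z Z + pscst be * (hform h X Z + hform h Z X)
                         + hform h X X.
  rewrite /u hform_addl !hform_addr !hform_scaler !hform_scalel sig_cst; ring.
have Hu0 : hform h u u = 0.
  apply/funext=> k; case: (eqVneq (hform h u u k) 0) => // nzk.
  have e1 := ode_support (hform_eig Hh eu eu) nzk.
  have e2 := ode_support (hform_eig Hh eZ eZ) Hk0.
  have kk0 : k = k0 by apply/eqP; rewrite -(eqr_nat CC) e1 e2.
  move: nzk; rewrite kk0 Huu !ps_add_coef expr2 -cst_mul !mulcst_coef ps_add_coef.
  have -> : be * be * hform h Z Z k0 + be * (hform h X Z k0 + hform h Z X k0) + hform h X X k0
          = hform h X X k0 + be * (hform h X Z k0 + hform h Z X k0) + be ^+ 2 * hform h Z Z k0.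
    by ring.
  by rewrite Hbe eqxx.
have nzu : exists i k, u i k != 0.
  case: (pselect (exists i k, u i k != 0)) => // Hn; exfalso.
  have u0 : forall i k, u i k = 0.
    by move=> i k; case: (eqVneq (u i k) 0) => // nz; exfalso; apply: Hn; exists i, k.
  have ucoef : forall i k, u i k = (psb ^+ p * v i) k + be * (psb ^+ q * w i) k.
    by move=> i k; rewrite /u /X /Z ps_add_coef mulcst_coef.
  case: (posnP q) => [q0|qpos].
  - case: (eqVneq be 0) => [be0|benz].
      case: vprim => i vi; have := u0 i p; rewrite ucoef be0 mul0r addr0 powb_coef leqnn subnn.
      by move=> H; rewrite H eqxx in vi.
    case: (posnP p) => [p0|ppos].
      apply: FG => x.
      have vw : v = (fun t => pscst (- be) * w t).
        apply/funext=> t; apply/funext=> k; have := u0 t k.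
        rewrite ucoef p0 q0 !expr0 !mul1r mulcst_coef => /eqP; rewrite addr_eq0 => /eqP ->.
        by rewrite mulNr.
      have wv : w = (fun t => pscst (- be^-1) * v t).
        apply/funext=> t; rewrite vw mulrA -cst_mul mulrNN mulVf // ps1E mul1r //.
      rewrite Fv Gw; split => [[s ->]|[s ->]].
        by exists (s * pscst (- be)); rewrite vw; apply/funext=> t; rewrite mulrA.
      by exists (s * pscst (- be^-1)); rewrite wv; apply/funext=> t; rewrite mulrA.
    case: wprim => i wi; have := u0 i 0%N; rewrite ucoef !powb_coef.
    have -> : (p <= 0)%N = false by rewrite leqNgt ppos.
    rewrite q0 leqnn subnn add0r => /eqP; rewrite mulf_eq0 (negbTE benz) /= => /eqP H.
    by rewrite H eqxx in wi.
  - case: pq0 => [p0|q0]; last by rewrite q0 in qpos.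
    case: vprim => i vi; have := u0 i 0%N; rewrite ucoef !powb_coef.
    have -> : (q <= 0)%N = false by rewrite leqNgt qpos.
    rewrite p0 leqnn subnn mulr0 addr0 => H.
    by rewrite H eqxx in vi.
have := prim_part Hh nzu eu Hu0. by [].
Qed.

Lemma cprim_lemma (M : abmod) h (Hh : is_herm_form h) (y : vec M) :
  (exists i, y i 0%N != 0) -> exists i0, cfun h y i0 0%N != 0.
Proof.
move=> yprim; have Hh' := Hh; case: Hh' => HA HS HN.
pose c : vec M := fun i => cfun h y i.
case: (boolP [exists i, c i 0%N != 0]) => [/existsP //|].
rewrite negb_exists => /forallP call.
have c0 : forall i, c i 0%N = 0 by move=> i; move: (call i); rewrite negbK => /eqP.
pose d : vec M := fun i k => c i k.+1.
have cd : forall i, c i = psb * d i by move=> i; exact: shift_b.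
case: (HN d) => z [Hz _].
pose z' : vec M := fun t => (- psb) * z t.
have Hz' : forall x : vec M, hform h x z' = pssum (fun i => psmul (x i) (c i)).
  move=> x; rewrite hform_scaler Hz sig_opp sig_b opprK !pssumE mulr_sumr.
  by apply: eq_bigr => i _; rewrite cd !psmulE mulrCA.
have Hy' : forall x : vec M, hform h x y = pssum (fun i => psmul (x i) (c i)).
  by move=> x; rewrite hformE pssumE.
have yz := hform_uniq Hh Hy' Hz'.
case: yprim => i; rewrite yz /z' ps_mul0_coef ps_opp_coef psb_coef /=.
by rewrite oppr0 mul0r eqxx.
Qed.

Lemma rank1_absurd (A : 'I_1 -> 'I_1 -> PS) h (y : 'I_1 -> PS) :
  @is_herm_form (ABMod A) h -> (exists i, y i 0%N != 0) -> @hform (ABMod A) h y y = 0 -> False.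
Proof.
move=> Hh yprim Hyy; case: (cprim_lemma Hh yprim) => i0; rewrite (ord1 i0) => ci0.
case: yprim => i; rewrite (ord1 i) => yi.
have := congr1 (fun f : PS => f 0%N) Hyy; rewrite hformE ps_sum_coef big_ord1 ps_mul0_coef.
by move/eqP; rewrite mulf_eq0 (negbTE ci0) (negbTE yi).
Qed.

Unset Implicit Arguments.
Set Strict Implicit.

Theorem mainTheorem3 (n : nat) (E : abmod) :
  rk E = n ->
  is_regular E ->
  is_hermitian E ->
  (exists (lambda f g : CC) (F G : vec E -> Prop),
      [/\ exists k : int, f = lambda + k%:~R,
          exists k : int, g = lambda + k%:~R,
          is_submod F /\ is_normal F /\ sub_rank F 1 /\ sub_iso (Elem f) F,
          is_submod G /\ is_normal G /\ sub_rank G 1 /\ sub_iso (Elem g) G &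
          ~ (forall x, F x <-> G x)]) ->
  exists F1 Fn1 : vec E -> Prop,
    [/\ is_submod F1 /\ is_normal F1 /\ sub_rank F1 1,
        is_submod Fn1 /\ is_normal Fn1 /\ sub_rank Fn1 (n - 1),
        (forall x, F1 x -> Fn1 x),
        (exists Q : abmod,
            quot_iso (fun _ => True) Fn1 Q /\ sub_iso (adjoint Q) F1) &
        (exists Q' : abmod, quot_iso Fn1 F1 Q' /\ is_hermitian Q')].
Proof.
move=> rkE _ [h Hh] [lambda [f [g [F [G [[k1 fk] [k2 gk] [_ [Fn [_ Fiso]]] [_ [Gn [_ Giso]]] FG]]]]]].
case: (extract Fn Fiso) => v [ev Fv vprim].
case: (extract Gn Giso) => w [ew Gw wprim].
have fd : f = g + (k1 - k2)%:~R by rewrite fk gk intrB; ring.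
case: (get_iso Hh ev ew Fv Gw vprim wprim fd FG) => y [mu [yprim ey Hyy]].
subst n; clear -Hh yprim ey Hyy.
move: h Hh y yprim ey Hyy; case: E => r A.
case: r A => [|[|m]] A h Hh y yprim ey Hyy.
- by case: yprim => -[].
- by exfalso; exact: rank1_absurd Hh yprim Hyy.
- exact: constructD Hh yprim ey Hyy.
Qed.
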